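(* Let $(\mathbb{Z}_{(p_n)},+\mathbf{1})$ and $(\mathbb{Z}_{(q_n)},+\mathbf{1})$ be odometers with scales $(p_n)$ and $(q_n)$ respectively, both with finite torsion, and let $s$ be a prime. If $\mathbf{v}_s((q_n))=\infty$ and $\operatorname{Aut}^{(\infty)}(\mathbb{Z}_{(p_n)},+\mathbf{1})\cong\operatorname{Aut}^{(\infty)}(\mathbb{Z}_{(q_n)},+\mathbf{1})$ as groups, then $\mathbf{v}_s((p_n))=\infty$.
   Context: A scale is a sequence $(p_n)$ of positive integers with $p_n\mid p_{n+1}$, not eventually constant; the odometer is $\mathbb{Z}_{(p_n)}=\{(x_n)\in\prod_n\mathbb{Z}/p_n\mathbb{Z}: x_{n+1}\equiv x_n\bmod p_n\}$ with translation by $\mathbf{1}=(1,1,\dots)$. For a prime $p$, $\mathbf{v}_p((p_n))=\lim_n\nu_p(p_n)\in\mathbb{N}\cup\{0,\infty\}$, $\nu_p$ the $p$-adic valuation. The odometer has finite torsion if $\mathbf{v}_p((p_n))\in\{0,\infty\}$ for all but finitely many primes $p$. $\operatorname{Aut}(X,T)$ is the group of homeomorphisms commuting with $T$ and $\operatorname{Aut}^{(\infty)}(X,T)=\bigcup_{n\ge1}\operatorname{Aut}(X,T^n)\subseteq\operatorname{Homeo}(X)$. *)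

(* Defs.v *)
From mathcomp Require Import all_boot.
Set Implicit Arguments. Unset Strict Implicit. Unset Printing Implicit Defensive.

Record scale := Scale {
  sc :> nat -> nat;
  sc_pos : forall n, 0 < sc n;
  sc_dvd : forall n, sc n %| sc n.+1;
  sc_nconst : ~ (exists N, forall n, N <= n -> sc n = sc N)
}.

Definition odo_pred (p : scale) (x : nat -> nat) : Prop :=
  forall n, x n < p n /\ x n.+1 %% p n = x n.

Definition odometer (p : scale) : Type := {x : nat -> nat | odo_pred p x}.

Lemma odoT_proof (p : scale) (x : odometer p) :
  odo_pred p (fun n => (proj1_sig x n + 1) %% p n).
Proof.
case: x => x Hx n /=; split; first by rewrite ltn_pmod // sc_pos.
rewrite (modn_dvdm _ (sc_dvd p n)) -modnDml.
by case: (Hx n) => _ ->.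
Qed.

Definition odoT (p : scale) (x : odometer p) : odometer p :=
  exist _ (fun n => (proj1_sig x n + 1) %% p n) (odoT_proof x).

(* Continuity for the product topology (discrete factors) restricted to the
   odometer: basic neighbourhoods of x are the cylinders {y | y_m = x_m}. *)
Definition odo_continuous (p q : scale) (f : odometer p -> odometer q) : Prop :=
  forall (x : odometer p) (n : nat), exists m : nat, forall y : odometer p,
    proj1_sig y m = proj1_sig x m -> proj1_sig (f y) n = proj1_sig (f x) n.

Definition is_homeo (p : scale) (f : odometer p -> odometer p) : Prop :=
  exists g : odometer p -> odometer p,
    cancel f g /\ cancel g f /\ odo_continuous f /\ odo_continuous g.

(* Aut^(infty)(X,T) = union over n >= 1 of Aut(X, T^n), inside Homeo(X). *)
Definition aut_inf (p : scale) (f : odometer p -> odometer p) : Prop :=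
  is_homeo f /\ exists k, 0 < k /\
    forall x, f (iter k (@odoT p) x) = iter k (@odoT p) (f x).

Definition aut_inf_iso (p q : scale) : Prop :=
  exists Phi : (odometer p -> odometer p) -> (odometer q -> odometer q),
    (forall f, aut_inf f -> aut_inf (Phi f)) /\
    (forall f g, aut_inf f -> aut_inf g -> Phi f = Phi g -> f = g) /\
    (forall h, aut_inf h -> exists2 f, aut_inf f & Phi f = h) /\
    (forall f g, aut_inf f -> aut_inf g -> Phi (f \o g) = Phi f \o Phi g).

(* v_s((p_n)) = lim_n nu_s(p_n). *)
Definition v_infty (p : scale) (s : nat) : Prop :=
  forall k, exists N, forall n, N <= n -> k <= logn s (p n).
Definition v_zero (p : scale) (s : nat) : Prop :=
  exists N, forall n, N <= n -> logn s (p n) = 0.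

Definition finite_torsion (p : scale) : Prop :=
  exists N, forall r, prime r -> N <= r -> v_zero p r \/ v_infty p r.

(* Main.v *)
Require Import Defs.
From mathcomp Require Import all_boot.
From mathcomp Require Import all_algebra zify ring lra.
From Stdlib Require Import ClassicalEpsilon FunctionalExtensionality ProofIrrelevance Classical.
Import GRing.Theory Num.Theory.

Set Implicit Arguments. Unset Strict Implicit. Unset Printing Implicit Defensive.

Definition ov (p : scale) (x : odometer p) (n : nat) : nat := proj1_sig x n.

Lemma sc_dvd_le (p : scale) n m : n <= m -> p n %| p m.
Proof.
elim: m => [|m IH]; first by rewrite leqn0 => /eqP ->.
rewrite leq_eqVlt => /orP [/eqP -> //|]; rewrite ltnS => /IH H.
exact: dvdn_trans H (sc_dvd p m).
Qed.

Lemma ov_lt (p : scale) (x : odometer p) n : ov x n < p n.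
Proof. by case: x => x Hx; case: (Hx n). Qed.

Lemma ov_mod (p : scale) (x : odometer p) n m : n <= m -> ov x m %% p n = ov x n.
Proof.
elim: m => [|m IH]; first by rewrite leqn0 => /eqP ->; rewrite modn_small // ov_lt.
rewrite leq_eqVlt => /orP [/eqP <-|]; first by rewrite modn_small // ov_lt.
rewrite ltnS => Hnm; rewrite -(IH Hnm) -(modn_dvdm _ (sc_dvd_le p Hnm)).
by case: x {IH} => x Hx /=; case: (Hx m) => _ ->.
Qed.

Lemma odo_ext (p : scale) (x y : odometer p) : (forall n, ov x n = ov y n) -> x = y.
Proof.
case: x => x Hx; case: y => y Hy /= H.
have E : x = y by apply: functional_extensionality.
subst y; by rewrite (proof_irrelevance _ Hx Hy).
Qed.

Lemma ov_iterT (p : scale) (x : odometer p) j n :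
  ov (iter j (@odoT p) x) n = (ov x n + j) %% p n.
Proof.
elim: j => [|j IH] /=; first by rewrite addn0 modn_small // ov_lt.
rewrite /ov /= -/(ov _ n) IH modnDml; congr (_ %% _); rewrite /ov; lia.
Qed.

Lemma ozero_proof (p : scale) : odo_pred p (fun _ => 0).
Proof. move=> n; split; [exact: sc_pos | exact: mod0n]. Qed.
Definition ozero (p : scale) : odometer p := exist _ (fun _ => 0) (ozero_proof p).
Definition iota (p : scale) (a : nat) : odometer p := iter a (@odoT p) (ozero p).
Lemma ov_iota (p : scale) a n : ov (iota p a) n = a %% p n.
Proof. by rewrite /iota ov_iterT. Qed.

Definition cgr (d : nat) (a b : int) : Prop := exists k : int, (a - b = k * d%:Z)%R.

Lemma cgrxx d a : cgr d a a.
Proof. by exists 0%R; rewrite subrr mul0r. Qed.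
Lemma cgr_sym d a b : cgr d a b -> cgr d b a.
Proof. by case=> k H; exists (- k)%R; lia. Qed.
Lemma cgr_trans d a b c : cgr d a b -> cgr d b c -> cgr d a c.
Proof. by case=> k H [l H']; exists (k + l)%R; lia. Qed.
Lemma cgrD d a b c e : cgr d a b -> cgr d c e -> cgr d (a + c)%R (b + e)%R.
Proof. by case=> k H [l H']; exists (k + l)%R; lia. Qed.
Lemma cgrN d a b : cgr d a b -> cgr d (- a)%R (- b)%R.
Proof. by case=> k H; exists (- k)%R; lia. Qed.
Lemma cgrB d a b c e : cgr d a b -> cgr d c e -> cgr d (a - c)%R (b - e)%R.
Proof. by move=> H1 H2; apply: cgrD H1 (cgrN H2). Qed.
Lemma cgrMl d c a b : cgr d a b -> cgr d (c * a)%R (c * b)%R.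
Proof. by case=> k H; exists (c * k)%R; rewrite -mulrBr H mulrA. Qed.
Lemma cgr_eq d a b : a = b -> cgr d a b.
Proof. by move=> ->; apply: cgrxx. Qed.
Lemma cgr_dvd d d' a b : (d' %| d)%N -> cgr d a b -> cgr d' a b.
Proof.
case/dvdnP=> m -> [k H]; exists (k * m%:Z)%R; rewrite H PoszM mulrA //.
Qed.
Lemma cgr0 d k : cgr d (k * d%:Z)%R 0%R.
Proof. by exists k; rewrite subr0. Qed.
Lemma cgr_add0 d a b c : cgr d c 0%R -> cgr d a b -> cgr d (a + c)%R b.
Proof. by case=> k H [l H']; exists (k + l)%R; lia. Qed.

Lemma cgr_sum d (I : Type) (r : seq I) (P : pred I) (F G : I -> int) :
  (forall i, P i -> cgr d (F i) (G i)) ->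
  cgr d (\sum_(i <- r | P i) F i)%R (\sum_(i <- r | P i) G i)%R.
Proof.
move=> H; elim: r => [|i r IH]; first by rewrite !big_nil; apply: cgrxx.
rewrite !big_cons; case: (P i) (H i) => // Hi.
by apply: cgrD => //; apply: Hi.
Qed.

Lemma cgr_divP d a b : cgr d a b <-> (d%:Z %| (a - b)%R)%Z.
Proof. by split; [case=> k H; apply/dvdzP; exists k | move/dvdzP]. Qed.

Lemma cgr_nat d (a b : nat) : cgr d a%:Z b%:Z <-> a = b %[mod d].
Proof.
rewrite cgr_divP -eqz_mod_dvd !modz_nat; split.
  by move/eqP => [].
by move=> ->.
Qed.

Lemma cgr_small d (a b : nat) : a < d -> b < d -> cgr d a%:Z b%:Z -> a = b.
Proof. by move=> Ha Hb /cgr_nat; rewrite !modn_small. Qed.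

Lemma cgr_modn d (a : nat) : cgr d (a %% d)%N%:Z a%:Z.
Proof. by apply/cgr_nat; rewrite modn_mod. Qed.

Lemma ov_cgr (p : scale) (x : odometer p) n m : n <= m -> cgr (p n) (ov x m)%:Z (ov x n)%:Z.
Proof. by move=> H; apply/cgr_nat; rewrite -(ov_mod x H) modn_mod. Qed.

Definition fpow (p : scale) (f : odometer p -> odometer p) (k : nat) :
  odometer p -> odometer p := fun x => iter k f x.

Lemma fpowS (p : scale) (f : odometer p -> odometer p) k : fpow f k.+1 = f \o fpow f k.
Proof. by []. Qed.

Lemma fpowM (p : scale) (f : odometer p -> odometer p) a b x :
  fpow f (a * b) x = fpow (fpow f b) a x.
Proof. by rewrite /fpow iterM. Qed.

Lemma fpow_fpow (p : scale) (f : odometer p -> odometer p) a b :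
  fpow (fpow f a) b = fpow (fpow f b) a.
Proof.
by apply: functional_extensionality => x; rewrite -!fpowM mulnC.
Qed.

Lemma cont_comp (p : scale) (f g : odometer p -> odometer p) :
  odo_continuous f -> odo_continuous g -> odo_continuous (f \o g).
Proof.
move=> Hf Hg x n; case: (Hf (g x) n) => m1 H1; case: (Hg x m1) => m2 H2.
by exists m2 => y /H2 /H1.
Qed.

Lemma cont_id (p : scale) : odo_continuous (fun x : odometer p => x).
Proof. by move=> x n; exists n. Qed.

Lemma comm_mul (p : scale) (f : odometer p -> odometer p) k :
  (forall x, f (iter k (@odoT p) x) = iter k (@odoT p) (f x)) ->
  forall j x, f (iter (j * k) (@odoT p) x) = iter (j * k) (@odoT p) (f x).
Proof.
move=> H; elim=> [|j IH] x //=.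
by rewrite mulSn !iterD H IH.
Qed.

Lemma is_homeo_id (p : scale) : is_homeo (fun x : odometer p => x).
Proof. by exists (fun x => x); split; [|split; [|split; apply: cont_id]]. Qed.

Lemma aut_inf_id (p : scale) : aut_inf (fun x : odometer p => x).
Proof. by split; [apply: is_homeo_id | exists 1]. Qed.

Lemma aut_inf_comp (p : scale) (f g : odometer p -> odometer p) :
  aut_inf f -> aut_inf g -> aut_inf (f \o g).
Proof.
move=> [[f' [Hf1 [Hf2 [Hf3 Hf4]]]] [k [Hk Hfk]]] [[g' [Hg1 [Hg2 [Hg3 Hg4]]]] [l [Hl Hgl]]].
split.
  exists (g' \o f'); split; first by move=> x /=; rewrite Hf1 Hg1.
  split; first by move=> x /=; rewrite Hg2 Hf2.
  by split; apply: cont_comp.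
exists (k * l); split; first by rewrite muln_gt0 Hk.
move=> x /=.
by rewrite (comm_mul Hgl) mulnC (comm_mul Hfk).
Qed.

Lemma aut_inf_fpow (p : scale) (f : odometer p -> odometer p) k :
  aut_inf f -> aut_inf (fpow f k).
Proof.
move=> Hf; elim: k => [|k IH]; first exact: aut_inf_id.
by rewrite fpowS; apply: aut_inf_comp.
Qed.

Lemma aut_inf_inv (p : scale) (f : odometer p -> odometer p) :
  aut_inf f -> exists g, [/\ aut_inf g, cancel f g & cancel g f].
Proof.
move=> [[g [H1 [H2 [H3 H4]]]] [k [Hk Hfk]]].
exists g; split => //; split.
  by exists f.
exists k; split => // x.
by rewrite -{1}(H2 x) -Hfk H1.
Qed.

Lemma aut_inf_inj (p : scale) (f : odometer p -> odometer p) : aut_inf f -> injective f.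
Proof. by move=> [[g [H1 _]] _]; apply: can_inj H1. Qed.

Definition Pg (p : scale) (s : nat) : Prop :=
  exists g : odometer p -> odometer p,
    [/\ aut_inf g,
        (forall k, 0 < k -> fpow g k <> (fun x => x)) &
        (forall n, 0 < n -> coprime n s -> exists h, aut_inf h /\ fpow h n = g)].

Lemma transfer (p q : scale) (s : nat) : aut_inf_iso p q -> Pg q s -> Pg p s.
Proof.
move=> [Phi [HA [Hinj [Hsurj Hhom]]]] [g [Hg Hord Hroot]].
have Hid : Phi (fun x => x) = (fun x => x).
  have E := Hhom _ _ (aut_inf_id p) (aut_inf_id p).
  have Hi := aut_inf_inj (HA _ (aut_inf_id p)).
  apply: functional_extensionality => x; apply: Hi.
  by have := f_equal (fun F => F x) E.
have Hpow : forall f k, aut_inf f -> Phi (fpow f k) = fpow (Phi f) k.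
  move=> f k Hf; elim: k => [|k IH]; first exact: Hid.
  by rewrite fpowS Hhom ?IH //; apply: aut_inf_fpow.
case: (Hsurj g Hg) => gp Hgp Egp.
exists gp; split => //.
  move=> k Hk E; apply: (Hord k Hk).
  by rewrite -Egp -Hpow // E Hid.
move=> n Hn Hc; case: (Hroot n Hn Hc) => hq [Hhq Ehq].
case: (Hsurj hq Hhq) => hp Hhp Ehp.
exists hp; split => //.
apply: Hinj; [exact: aut_inf_fpow | exact: Hgp |].
by rewrite Hpow // Ehp Ehq Egp.
Qed.

Definition mkv (p : scale) (w : nat -> int) (n : nat) : nat := `|(w n %% (p n)%:Z)%Z|%N.

Lemma pn_neq0 (p : scale) n : ((p n)%:Z != 0)%R.
Proof. by rewrite eqz_nat -lt0n sc_pos. Qed.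

Lemma mkv_Posz (p : scale) w n : ((mkv p w n)%:Z = (w n %% (p n)%:Z)%Z)%R.
Proof. by rewrite /mkv gez0_abs // modz_ge0 // pn_neq0. Qed.

Lemma mkv_cgr (p : scale) w n : cgr (p n) (mkv p w n)%:Z (w n).
Proof.
rewrite mkv_Posz; exists (- (w n %/ (p n)%:Z)%Z)%R.
rewrite {2}(divz_eq (w n) (p n)%:Z); ring.
Qed.

Lemma mkv_lt (p : scale) w n : mkv p w n < p n.
Proof.
rewrite -ltz_nat mkv_Posz ltz_pmod // ltz_nat; exact: sc_pos.
Qed.

Lemma mk_proof (p : scale) (w : nat -> int) (Hw : forall n, cgr (p n) (w n.+1) (w n)) :
  odo_pred p (mkv p w).
Proof.
move=> n; split; first exact: mkv_lt.
apply: (@cgr_small (p n)); [by rewrite ltn_pmod // sc_pos | exact: mkv_lt |].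
apply: cgr_trans (cgr_modn _ _) _.
apply: cgr_trans (cgr_dvd (sc_dvd p n) (mkv_cgr p w n.+1)) _.
apply: cgr_trans (Hw n) _.
exact: cgr_sym (mkv_cgr p w n).
Qed.

Definition mk (p : scale) (w : nat -> int) (Hw : forall n, cgr (p n) (w n.+1) (w n)) :
  odometer p := exist _ (mkv p w) (mk_proof Hw).

Lemma ov_mk (p : scale) w Hw n : cgr (p n) (ov (@mk p w Hw) n)%:Z (w n).
Proof. exact: mkv_cgr. Qed.

Lemma odo_eq_cgr (p : scale) (x y : odometer p) :
  (forall n, cgr (p n) (ov x n)%:Z (ov y n)%:Z) -> x = y.
Proof. by move=> H; apply: odo_ext => n; apply: cgr_small (H n); apply: ov_lt. Qed.

Lemma ov_odoT (p : scale) (x : odometer p) n : cgr (p n) (ov (odoT x) n)%:Z ((ov x n)%:Z + 1)%R.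
Proof.
have := ov_iterT x 1 n; rewrite /= => ->.
by apply: cgr_trans (cgr_modn _ _) _; rewrite PoszD; apply: cgrxx.
Qed.

Lemma tr_compat (p : scale) (f y : odometer p) n :
  cgr (p n) ((ov y n.+1)%:Z + (ov f n.+1)%:Z)%R ((ov y n)%:Z + (ov f n)%:Z)%R.
Proof. by apply: cgrD; apply: ov_cgr. Qed.

Definition tr (p : scale) (f : odometer p) (y : odometer p) : odometer p :=
  @mk p (fun n => (ov y n)%:Z + (ov f n)%:Z)%R (tr_compat f y).

Lemma ov_tr (p : scale) (f y : odometer p) n :
  cgr (p n) (ov (tr f y) n)%:Z ((ov y n)%:Z + (ov f n)%:Z)%R.
Proof. exact: mkv_cgr. Qed.

Lemma neg_compat (p : scale) (f : odometer p) n :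
  cgr (p n) (- (ov f n.+1)%:Z)%R (- (ov f n)%:Z)%R.
Proof. by apply: cgrN; apply: ov_cgr. Qed.

Definition oneg (p : scale) (f : odometer p) : odometer p :=
  @mk p (fun n => - (ov f n)%:Z)%R (neg_compat f).

Lemma cont_levelwise (p : scale) (F : odometer p -> odometer p) :
  (forall x y n, ov x n = ov y n -> ov (F x) n = ov (F y) n) -> odo_continuous F.
Proof. by move=> H x n; exists n => y Hy; apply: H. Qed.

Lemma aut_inf_tr (p : scale) (f : odometer p) : aut_inf (tr f).
Proof.
have Hc : forall g : odometer p, odo_continuous (tr g).
  move=> g; apply: cont_levelwise => x y n Hxy; apply: cgr_small; try exact: ov_lt.
  apply: cgr_trans (ov_tr _ _ _) _; rewrite Hxy; exact: cgr_sym (ov_tr _ _ _).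
split.
  exists (tr (oneg f)); split.
    move=> y; apply: odo_eq_cgr => n.
    apply: cgr_trans (ov_tr _ _ _) _.
    have H1 := ov_tr f y n; have H2 : cgr (p n) (ov (oneg f) n)%:Z (- (ov f n)%:Z)%R := ov_mk (neg_compat f) n.
    case: H1 => k1 E1; case: H2 => k2 E2; exists (k1 + k2)%R.
    lia.
  split.
    move=> y; apply: odo_eq_cgr => n.
    apply: cgr_trans (ov_tr _ _ _) _.
    have H1 := ov_tr (oneg f) y n; have H2 : cgr (p n) (ov (oneg f) n)%:Z (- (ov f n)%:Z)%R := ov_mk (neg_compat f) n.
    case: H1 => k1 E1; case: H2 => k2 E2; exists (k1 + k2)%R.
    lia.
  by split; apply: Hc.
exists 1; split => // x /=.
apply: odo_eq_cgr => n.
have H1 := ov_tr f (odoT x) n; have H2 := ov_odoT x n.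
have H3 := ov_odoT (tr f x) n; have H4 := ov_tr f x n.
case: H1 => k1 E1; case: H2 => k2 E2; case: H3 => k3 E3; case: H4 => k4 E4.
exists (k1 + k2 - k3 - k4)%R; lia.
Qed.

Lemma ov_fpow_tr (p : scale) (f y : odometer p) k n :
  cgr (p n) (ov (fpow (tr f) k y) n)%:Z ((ov y n)%:Z + k%:Z * (ov f n)%:Z)%R.
Proof.
elim: k => [|k IH]; first by apply: cgr_eq; rewrite mul0r addr0.
change (fpow (tr f) k.+1 y) with (tr f (fpow (tr f) k y)).
have H1 := ov_tr f (fpow (tr f) k y) n.
case: H1 => k1 E1; case: IH => k2 E2; exists (k1 + k2)%R.
rewrite -[k.+1]addn1 PoszD. lia.
Qed.

Lemma coprimez_nat (a b : nat) : coprime a b -> coprimez a%:Z b%:Z.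
Proof. by rewrite /coprimez /gcdz /= => /eqP ->. Qed.

Lemma cgr_crt (m1 m2 : nat) a b : coprime m1 m2 -> cgr m1 a b -> cgr m2 a b -> cgr (m1 * m2) a b.
Proof.
move=> Hc /cgr_divP H1 /cgr_divP H2; apply/cgr_divP.
by rewrite PoszM Gauss_dvdz ?H1 ?H2 //; apply: coprimez_nat.
Qed.

Lemma cgr_zchinese (m1 m2 : nat) r1 r2 : coprime m1 m2 ->
  cgr m1 (zchinese m1%:Z m2%:Z r1 r2) r1 /\ cgr m2 (zchinese m1%:Z m2%:Z r1 r2) r2.
Proof.
move=> Hc; have Hz := coprimez_nat Hc; split; apply/cgr_divP; rewrite -eqz_mod_dvd; apply/eqP.
  exact: zchinese_modl.
exact: zchinese_modr.
Qed.

Section PartA.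
Variables (q : scale) (s : nat).
Hypothesis (Hs : prime s) (Hinf : v_infty q s).

Let sh n := (q n)`_s.
Let u n := (q n)`_s^'.

Lemma shu n : sh n * u n = q n.
Proof. by rewrite /sh /u partnC // sc_pos. Qed.
Lemma shu_cop n : coprime (sh n) (u n).
Proof. exact: coprime_partC. Qed.
Lemma sh_dvd n : sh n %| sh n.+1.
Proof. by apply: partn_dvd; [apply: sc_pos | apply: sc_dvd]. Qed.
Lemma u_dvd n : u n %| u n.+1.
Proof. by apply: partn_dvd; [apply: sc_pos | apply: sc_dvd]. Qed.

Lemma cgr_q n a b : cgr (sh n) a b -> cgr (u n) a b -> cgr (q n) a b.
Proof. by move=> H1 H2; rewrite -shu; apply: cgr_crt => //; apply: shu_cop. Qed.

Definition zz n r := zchinese (sh n)%:Z (u n)%:Z r 0%R.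

Lemma zz_sh n r : cgr (sh n) (zz n r) r.
Proof. exact: (cgr_zchinese r 0%R (shu_cop n)).1. Qed.
Lemma zz_u n r : cgr (u n) (zz n r) 0%R.
Proof. exact: (cgr_zchinese r 0%R (shu_cop n)).2. Qed.

Lemma zz_compat (alpha : nat -> int) :
  (forall n, cgr (sh n) (alpha n.+1) (alpha n)) ->
  forall n, cgr (q n) (zz n.+1 (alpha n.+1)) (zz n (alpha n)).
Proof.
move=> Ha n; apply: cgr_q.
  apply: cgr_trans (cgr_dvd (sh_dvd n) (zz_sh _ _)) _.
  apply: cgr_trans (Ha n) _; exact: cgr_sym (zz_sh _ _).
apply: cgr_trans (cgr_dvd (u_dvd n) (zz_u _ _)) _; exact: cgr_sym (zz_u _ _).
Qed.

Definition ee : odometer q :=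
  @mk q (fun n => zz n 1%R) (@zz_compat (fun _ => 1%R) (fun n => cgrxx _ _)).

Lemma ee_sh n : cgr (sh n) (ov ee n)%:Z 1%R.
Proof.
apply: cgr_trans (cgr_dvd _ (ov_mk _ n)) (zz_sh _ _).
by rewrite -shu dvdn_mulr.
Qed.
Lemma ee_u n : cgr (u n) (ov ee n)%:Z 0%R.
Proof.
apply: cgr_trans (cgr_dvd _ (ov_mk _ n)) (zz_u _ _).
by rewrite -shu dvdn_mull.
Qed.

Section Root.
Variable m : nat.
Hypothesis Hm : coprime m s.

Lemma gcd_shm n : gcdz (sh n)%:Z m%:Z = 1%R.
Proof.
rewrite /gcdz /= /sh p_part.
have : coprime (s ^ logn s (q n)) m by apply: coprimeXl; rewrite coprime_sym.
by rewrite /coprime => /eqP ->.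
Qed.

Definition alpha n : int := sval (projT2 (Bezoutz (sh n)%:Z m%:Z)).

Lemma alpha_inv n : cgr (sh n) (alpha n * m%:Z)%R 1%R.
Proof.
rewrite /alpha; case: (Bezoutz _ _) => a [b /= E].
rewrite gcd_shm in E; exists (- a)%R; lia.
Qed.

Lemma alpha_compat n : cgr (sh n) (alpha n.+1) (alpha n).
Proof.
have H1 := cgr_dvd (sh_dvd n) (alpha_inv n.+1).
have H2 := alpha_inv n.
case: H1 => k1 E1; case: H2 => k2 E2.
exists (alpha n * k1 - alpha n.+1 * k2)%R.
rewrite mulrBl -!mulrA -E1 -E2; ring.
Qed.

Definition rt : odometer q :=
  @mk q (fun n => zz n (alpha n)) (zz_compat alpha_compat).

Lemma rt_spec n : cgr (q n) (m%:Z * (ov rt n)%:Z)%R (ov ee n)%:Z.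
Proof.
apply: cgr_q.
  apply: cgr_trans (cgrMl _ (cgr_trans (cgr_dvd _ (ov_mk _ n)) (zz_sh _ _))) _.
    by rewrite -shu dvdn_mulr.
  rewrite mulrC; apply: cgr_trans (alpha_inv n) _; exact: cgr_sym (ee_sh n).
apply: cgr_trans (cgrMl _ (cgr_trans (cgr_dvd _ (ov_mk _ n)) (zz_u _ _))) _.
  by rewrite -shu dvdn_mull.
rewrite mulr0; exact: cgr_sym (ee_u n).
Qed.

Lemma rt_root : fpow (tr rt) m = tr ee.
Proof.
apply: functional_extensionality => y; apply: odo_eq_cgr => n.
have H1 := ov_fpow_tr rt y m n; have H2 := rt_spec n; have H3 := ov_tr ee y n.
case: H1 => k1 E1; case: H2 => k2 E2; case: H3 => k3 E3.
exists (k1 + k2 - k3)%R; lia.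
Qed.
End Root.

Lemma ee_inf k : 0 < k -> fpow (tr ee) k <> (fun x => x).
Proof.
move=> Hk E.
case: (Hinf k) => N HN; have HlN := HN N (leqnn N).
have H1 := @ov_fpow_tr q ee (ozero q) k N.
rewrite E in H1.
have H2 : cgr (sh N) (k%:Z) 0%R.
  have H3 : cgr (sh N) _ _ := cgr_dvd (dvdn_part s (q N)) H1.
  have H4 := cgrMl k%:Z (ee_sh N).
  case: H3 => k3 E3; case: H4 => k4 E4.
  exists (- k3 - k4)%R; have Z : ov (ozero q) N = 0 := erefl; rewrite Z in E3. lia.
have : sh N %| k.
  by move/cgr_nat: H2; rewrite mod0n /dvdn => ->.
rewrite /sh p_part => Hd.
have : s ^ k %| k by apply: dvdn_trans _ Hd; rewrite dvdn_exp2l // prime_gt0.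
move/(dvdn_leq Hk); rewrite leqNgt ltn_expl //; exact: prime_gt1.
Qed.

Lemma partA : Pg q s.
Proof.
exists (tr ee); split; first exact: aut_inf_tr.
  exact: ee_inf.
move=> n Hn Hc; exists (tr (rt Hc)); split; first exact: aut_inf_tr.
exact: (rt_root Hc).
Qed.
End PartA.

Definition lev (p : scale) (f : odometer p -> odometer p) (M : nat) : Prop :=
  forall x y : odometer p, ov x M = ov y M -> forall n,
    cgr (p n) ((ov (f x) n)%:Z + (ov y n)%:Z)%R ((ov (f y) n)%:Z + (ov x n)%:Z)%R.

Lemma stab (g : nat -> nat) B : (forall n, g n <= B) -> (forall n m, n <= m -> g n <= g m) ->
  exists M, forall M', M <= M' -> g M' = g M.
Proof.
move=> HB Hm.
suff H : forall d N, B - g N <= d -> exists M, forall M', M <= M' -> g M' = g M.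
  exact: (H B 0 (leq_subr _ _)).
elim=> [|d IH] N HN.
  exists N => M' HM'; have := Hm N M' HM'; have := HB M'; move: HN; lia.
case: (classic (forall M', N <= M' -> g M' = g N)) => [H|]; first by exists N.
move/not_all_ex_not => [M' HM0].
have HNM := not_imply_elim _ _ HM0; have HM' := not_imply_elim2 _ _ HM0.
apply: (IH M').
have H1 : g N < g M'.
  have h1 := Hm N M' HNM.
  case: (ltngtP (g N) (g M')) => // h; first lia.
  by exfalso; apply: HM'; rewrite h.
have := HB M'; move: HN; lia.
Qed.

Lemma ov_iter_cgr (p : scale) (x : odometer p) j n :
  cgr (p n) (ov (iter j (@odoT p) x) n)%:Z ((ov x n)%:Z + j%:Z)%R.
Proof. rewrite ov_iterT; apply: cgr_trans (cgr_modn _ _) _; rewrite PoszD; exact: cgrxx. Qed.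

Lemma aut_inf_lev (p : scale) (f : odometer p -> odometer p) : aut_inf f -> exists M, lev f M.
Proof.
move=> [[f' [_ [_ [Hc _]]]] [K [HK HfK]]].
have [M HM] : exists M, forall M', M <= M' -> gcdn K (p M') = gcdn K (p M).
  apply: (@stab (fun n => gcdn K (p n)) K).
    by move=> n; apply: dvdn_leq => //; apply: dvdn_gcdl.
  move=> n m Hnm; apply: dvdn_leq; first by rewrite gcdn_gt0 HK.
  by rewrite dvdn_gcd dvdn_gcdl /=; apply: dvdn_trans (dvdn_gcdr _ _) (sc_dvd_le p Hnm).
exists M => x y Exy n.
case: (Hc y n) => m1 Hm1.
set M' := maxn m1 (maxn M n).
have HM'1 : m1 <= M' by rewrite leq_maxl.
have HM'2 : M <= M' by rewrite /M' (leq_trans (leq_maxl M n)) // leq_maxr.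
have HM'3 : n <= M' by rewrite /M' (leq_trans (leq_maxr M n)) // leq_maxr.
set P' := p M'.
have HP' : 0 < P' by apply: sc_pos.
have Hd : (gcdn K P' %| p M)%N by rewrite /P' HM // dvdn_gcdr.
have Hxy : cgr (p M) (ov y M')%:Z (ov x M')%:Z.
  apply: cgr_trans (ov_cgr y HM'2) _; rewrite -Exy; exact: cgr_sym (ov_cgr x HM'2).
have [c Ec] : exists c : int, ((ov y M')%:Z - (ov x M')%:Z = c * (gcdn K P')%:Z)%R.
  case: (cgr_dvd Hd Hxy) => c Ec; by exists c.
case: (Bezoutz (K%:Z)%R (P'%:Z)%R) => a [b Eab].
have Eg : gcdz (K%:Z)%R (P'%:Z)%R = ((gcdn K P')%:Z)%R by [].
rewrite Eg in Eab.
set j := `|((a * c) %% P'%:Z)%Z|%N.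
have Hj : cgr P' j%:Z (a * c)%R.
  have := mkv_cgr p (fun _ => (a * c)%R) M'; by [].
set z := iter (j * K) (@odoT p) x.
have Hz : ov z M' = ov y M'.
  apply: (@cgr_small P'); try exact: ov_lt.
  apply: cgr_trans (ov_iter_cgr _ _ _) _.
  case: Hj => k1 E1.
  have E1K : ((j%:Z - a * c) * K%:Z = k1 * P'%:Z * K%:Z)%R by rewrite E1.
  have EabC : ((a * K%:Z + b * P'%:Z) * c = (gcdn K P')%:Z * c)%R by rewrite Eab.
  exists (k1 * K%:Z - b * c)%R. rewrite PoszM -/P'. lia.
have Hfz : ov (f z) n = ov (f y) n.
  apply: Hm1; change (ov z m1 = ov y m1); by rewrite -(ov_mod z HM'1) -(ov_mod y HM'1) Hz.
have E1 : f z = iter (j * K) (@odoT p) (f x) by rewrite /z comm_mul.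
have H2 := ov_iter_cgr (f x) (j * K) n.
rewrite -E1 Hfz in H2.
have H3 : cgr (p n) (ov y n)%:Z ((ov x n)%:Z + (j * K)%N%:Z)%R.
  apply: cgr_trans (cgr_sym (ov_cgr y HM'3)) _.
  rewrite -Hz; apply: cgr_trans (cgr_dvd (sc_dvd_le p HM'3) (ov_iter_cgr _ _ _)) _.
  apply: cgrD; [exact: ov_cgr | exact: cgrxx].
case: H2 => k2 E2; case: H3 => k3 E3; exists (k3 - k2)%R; lia.
Qed.

Lemma lev_mono (p : scale) f M M' : @lev p f M -> M <= M' -> lev f M'.
Proof.
move=> H HM x y Exy; apply: H.
by rewrite -(ov_mod x HM) -(ov_mod y HM) Exy.
Qed.

Lemma lev_M (p : scale) f M (x y : odometer p) : lev f M -> ov x M = ov y M -> ov (f x) M = ov (f y) M.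
Proof.
move=> H Exy; have := H x y Exy M; rewrite Exy => Hc.
apply: (@cgr_small (p M)); try exact: ov_lt.
by case: Hc => k E; exists k; lia.
Qed.

Lemma lev_comp (p : scale) f g M : @lev p f M -> lev g M -> lev (f \o g) M.
Proof.
move=> Hf Hg x y Exy n /=.
have E := lev_M Hg Exy.
have H1 := Hf _ _ E n; have H2 := Hg _ _ Exy n.
case: H1 => k1 E1; case: H2 => k2 E2; exists (k1 + k2)%R; lia.
Qed.

Lemma lev_id (p : scale) M : lev (fun x : odometer p => x) M.
Proof. by move=> x y _ n; apply: cgr_eq; rewrite addrC. Qed.

Lemma lev_fpow (p : scale) f M k : @lev p f M -> lev (fpow f k) M.
Proof.
move=> H; elim: k => [|k IH]; first exact: lev_id.
by rewrite fpowS; apply: lev_comp.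
Qed.

Definition disp (p : scale) (f : odometer p -> odometer p) (n a : nat) : int :=
  ((ov (f (iota p a)) n)%:Z - a%:Z)%R.

Lemma ov_iota_M (p : scale) (y : odometer p) M : ov (iota p (ov y M)) M = ov y M.
Proof. by rewrite ov_iota modn_small // ov_lt. Qed.

Lemma lev_disp (p : scale) f M (y : odometer p) n : lev f M ->
  cgr (p n) (ov (f y) n)%:Z ((ov y n)%:Z + disp f n (ov y M))%R.
Proof.
move=> H; have := H _ _ (ov_iota_M y M) n.
have Hi : cgr (p n) (ov (iota p (ov y M)) n)%:Z (ov y M)%:Z by rewrite ov_iota; exact: cgr_modn.
rewrite /disp.
case=> k1 E1; case: Hi => k2 E2; exists (- k1 - k2)%R; lia.
Qed.

Lemma disp_lvl (p : scale) f L0 L a : L0 <= L -> cgr (p L0) (disp f L a) (@disp p f L0 a).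
Proof. by move=> H; rewrite /disp; apply: cgrB; [apply: ov_cgr | apply: cgrxx]. Qed.

Definition ordM (p : scale) (y : odometer p) M : 'I_(p M) := Ordinal (ov_lt y M).
Definition sig (p : scale) (f : odometer p -> odometer p) M (a : 'I_(p M)) : 'I_(p M) :=
  ordM (f (iota p a)) M.

Lemma sig_spec (p : scale) f M (y : odometer p) : lev f M -> sig f (ordM y M) = ordM (f y) M.
Proof. by move=> H; apply: val_inj => /=; apply: lev_M H _; apply: ov_iota_M. Qed.

Lemma sig_iter (p : scale) f M (y : odometer p) j : lev f M ->
  iter j (sig f (M:=M)) (ordM y M) = ordM (fpow f j y) M.
Proof.
move=> H; elim: j => [|j IH] //=.
by rewrite IH sig_spec.
Qed.

Lemma ordM_iota (p : scale) M (a : 'I_(p M)) : ordM (iota p a) M = a.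
Proof. by apply: val_inj; rewrite /= ov_iota modn_small. Qed.

Lemma sig_inj (p : scale) f f' M : lev f M -> @lev p f' M -> cancel f f' -> injective (sig f (M:=M)).
Proof.
move=> Hf Hf' Hc a b E.
have E1 : ov (f (iota p a)) M = ov (f (iota p b)) M by have := f_equal val E.
have := lev_M Hf' E1; rewrite !Hc !ov_iota !modn_small // => E2.
exact: val_inj.
Qed.

Lemma order_le_card (T : finType) (f : T -> T) x : order f x <= #|T|.
Proof. by rewrite -size_orbit -(card_uniqP (orbit_uniq f x)) max_card. Qed.

Lemma iter_fact (T : finType) (f : T -> T) x : injective f -> iter (#|T|)`! f x = x.
Proof.
move=> Hf.
have Hd : order f x %| (#|T|)`! by apply: dvdn_fact; rewrite order_gt0 order_le_card.
case/dvdnP: Hd => t ->.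
rewrite iterM; elim: t => [|t IH] //=.
by rewrite IH iter_order.
Qed.

Lemma perm_pow (p : scale) f f' M : lev f M -> @lev p f' M -> cancel f f' ->
  exists e, 0 < e /\ forall y, ov (fpow f e y) M = ov y M.
Proof.
move=> Hf Hf' Hc; exists (#|'I_(p M)|)`!; split; first exact: fact_gt0.
move=> y; have := f_equal val (sig_iter y (#|'I_(p M)|)`! Hf).
by rewrite iter_fact //; last exact: sig_inj Hf Hf' Hc.
Qed.

Lemma cp_M (p : scale) f M : (forall y : odometer p, ov (f y) M = ov y M) ->
  forall j y, ov (fpow f j y) M = ov y M.
Proof. by move=> H; elim=> [|j IH] y //; rewrite fpowS /= H IH. Qed.

Lemma cp_iter (p : scale) f M : lev f M -> (forall y : odometer p, ov (f y) M = ov y M) ->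
  forall j y n, cgr (p n) (ov (fpow f j y) n)%:Z ((ov y n)%:Z + j%:Z * disp f n (ov y M))%R.
Proof.
move=> Hl Hcp; elim=> [|j IH] y n; first by apply: cgr_eq; rewrite mul0r addr0.
change (fpow f j.+1 y) with (f (fpow f j y)).
have H1 := lev_disp (fpow f j y) n Hl; rewrite (cp_M Hcp) in H1.
case: H1 => k1 E1; case: (IH y n) => k2 E2; exists (k1 + k2)%R.
rewrite -[j.+1]addn1 PoszD; lia.
Qed.

Lemma cp_disp (p : scale) f M : lev f M -> (forall y : odometer p, ov (f y) M = ov y M) ->
  forall j n a, a < p M -> cgr (p n) (disp (fpow f j) n a) (j%:Z * disp f n a)%R.
Proof.
move=> Hl Hcp j n a Ha.
have H := cp_iter Hl Hcp j (iota p a) n.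
rewrite [ov (iota p a) M]ov_iota (modn_small Ha) in H.
have Hi : cgr (p n) (ov (iota p a) n)%:Z a%:Z by rewrite ov_iota; exact: cgr_modn.
change (disp (fpow f j) n a) with ((ov (fpow f j (iota p a)) n)%:Z - a%:Z)%R.
case: H => k1 E1; case: Hi => k2 E2; exists (k1 + k2)%R.
lia.
Qed.

Definition dec (P : Prop) : bool := if excluded_middle_informative P then true else false.
Lemma decP (P : Prop) : reflect P (dec P).
Proof. by rewrite /dec; case: excluded_middle_informative => H; constructor. Qed.

Lemma iter_inj (T : Type) (f : T -> T) j : injective f -> injective (iter j f).
Proof. by move=> Hf; elim: j => [|j IH] //= x y /Hf /IH. Qed.

Lemma count_mod (W : pred nat) P0 Q : (forall a, W a = W (a %% P0)) ->
  \sum_(0 <= a < Q * P0 | W a) 1 = Q * \sum_(0 <= b < P0 | W b) 1.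
Proof.
move=> HW; elim: Q => [|Q IH]; first by rewrite mul0n big_geq.
have shift : \sum_(P0 <= a < P0 + Q * P0 | W a) 1 = \sum_(0 <= a < Q * P0 | W a) 1.
  rewrite -{1}[P0]add0n big_addn addKn.
  by apply: eq_bigl => i; rewrite HW [in RHS]HW modnDr.
by rewrite mulSn (@big_cat_nat _ _ _ P0) //= ?leq_addr // shift IH mulSn.
Qed.

Lemma val_cancel r m j z : prime r -> 0 < m -> r ^ (logn r m + j) %| m * z -> r ^ j %| z.
Proof.
move=> Hr Hm; case: (posnP z) => [-> _|Hz]; first exact: dvdn0.
rewrite !pfactor_dvdn ?muln_gt0 ?Hm // lognM //; lia.
Qed.

Lemma logn_lt r t : prime r -> 0 < t -> logn r t < t.
Proof.
move=> Hr Ht; have H := pfactor_dvdnn r t.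
have := dvdn_leq Ht H; apply: leq_trans; apply: ltn_expl; exact: prime_gt1.
Qed.

Lemma logn_mono (p : scale) r n m : n <= m -> logn r (p n) <= logn r (p m).
Proof. by move=> H; apply: dvdn_leq_log; [apply: sc_pos | apply: sc_dvd_le]. Qed.

Lemma not_vinf_bound (p : scale) r : ~ v_infty p r -> exists B, forall L, logn r (p L) < B.
Proof.
move=> H; apply: NNPP => H2; apply: H => k.
apply: NNPP => H3; apply: H2; exists k => L.
apply: NNPP => H4; apply: H3; exists L => n Hn.
have := logn_mono p r Hn; lia.
Qed.

Lemma torsion_killer (p : scale) : finite_torsion p ->
  exists E, 0 < E /\ forall r L, prime r -> ~ v_infty p r -> r ^ logn r (p L) %| E.
Proof.
move=> [N HN].
have [E [HE HE2]] : exists E, 0 < E /\ forall r L, r < N -> prime r -> ~ v_infty p r ->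
    r ^ logn r (p L) %| E.
  elim: N {HN} => [|N [E [HE HE2]]]; first by exists 1.
  case: (classic (prime N /\ ~ v_infty p N)) => [[HpN HnN]|Hno].
    case: (not_vinf_bound HnN) => B HB.
    exists (E * N ^ B); split; first by rewrite muln_gt0 HE expn_gt0 prime_gt0.
    move=> r L; rewrite ltnS leq_eqVlt => /orP [/eqP -> _ _|Hr Hpr Hnr].
      by apply: dvdn_mull; rewrite dvdn_exp2l // ltnW // HB.
    by apply: dvdn_mulr; apply: HE2.
  exists E; split => // r L; rewrite ltnS leq_eqVlt => /orP [/eqP -> Hp Hn|Hr Hpr Hnr].
    by exfalso; apply: Hno.
  exact: HE2.
exists E; split => // r L Hr Hnr.
case: (ltnP r N) => HrN; first exact: HE2.
case: (HN r Hr HrN) => // [[N' HN']].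
have : logn r (p L) = 0.
  apply/eqP; rewrite -leqn0 -(HN' (maxn L N')) ?leq_maxr //.
  by apply: logn_mono; rewrite leq_maxl.
by move=> ->; rewrite expn0 dvd1n.
Qed.

Lemma dvdz_nat (d : nat) (x : int) : (d%:Z %| x)%Z = (d %| `|x|%N).
Proof. by []. Qed.

Lemma find_prime (p : scale) E L0 (x w : int) :
  (forall r L, prime r -> ~ v_infty p r -> r ^ logn r (p L) %| E) ->
  ~ cgr (p L0) x 0%R -> cgr (p L0) x (E%:Z * w)%R ->
  exists r, [/\ prime r, v_infty p r & ~ (r ^ logn r (p L0) %| `|x|%N)].
Proof.
move=> HE Hx Hxw.
have Hnd : ~ (p L0 %| `|x|%N).
  move=> H; apply: Hx; apply/cgr_divP; by rewrite subr0 dvdz_nat.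
have [r Hr] : exists r, ~ (r \in \pi(p L0) -> (p L0)`_r %| `|x|%N).
  apply: NNPP => H2; apply: Hnd; apply/(dvdn_partP _ (sc_pos p L0)).
  by move=> r Hr; apply: NNPP => H3; apply: H2; exists r => H4; apply: H3; apply: H4.
have Hr1 := not_imply_elim _ _ Hr; have Hr2 := not_imply_elim2 _ _ Hr.
have Hpr : prime r by move: Hr1; rewrite mem_primes => /andP [].
rewrite p_part in Hr2.
exists r; split => //.
apply: NNPP => Hnr; apply: Hr2.
have H1 := HE r L0 Hpr Hnr.
have H2 : (((r ^ logn r (p L0))%:Z)%R %| (x - E%:Z * w)%R)%Z.
  apply: dvdz_trans _ (iffLR (@cgr_divP _ _ _) Hxw); rewrite dvdz_nat /=; apply: pfactor_dvdnn.
have H3 : (((r ^ logn r (p L0))%:Z)%R %| (E%:Z * w)%R)%Z.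
  by apply: dvdz_mulr; rewrite dvdz_nat.
rewrite -dvdz_nat.
have -> : x = ((x - E%:Z * w) + E%:Z * w)%R by ring.
by apply: rpredD.
Qed.

Section Core.
Variables (p : scale) (g2 h hi : odometer p -> odometer p) (M0 M L Q N b0 : nat).
Hypotheses (HM0M : M0 <= M) (HML : M <= L) (Hg2 : lev g2 M0)
  (Hcp : forall y, ov (g2 y) M0 = ov y M0) (Hh : lev h M) (Hhi : lev hi M)
  (Hc : cancel h hi) (HQ : Q * p M0 = p M) (HN : fpow h N = fpow g2 Q) (Hb0 : b0 < p M0).

Local Notation P := (p M).
Local Notation P0 := (p M0).
Local Notation G := (fpow g2 Q).
Local Notation sg := (sig h (M:=M)).

Lemma HG : lev G M.
Proof. by apply: lev_mono HM0M; apply: lev_fpow. Qed.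

Lemma sg_inj : injective sg.
Proof. exact: sig_inj Hh Hhi Hc. Qed.

Lemma F1 (a : nat) L' : a < P -> cgr (p L') (disp G L' a) (Q%:Z * disp g2 L' (a %% P0))%R.
Proof.
move=> Ha.
have H := cp_iter Hg2 Hcp Q (iota p a) L'.
rewrite [ov (iota p a) M0]ov_iota in H.
have Hi : cgr (p L') (ov (iota p a) L')%:Z a%:Z by rewrite ov_iota; exact: cgr_modn.
change (disp G L' a) with ((ov (G (iota p a)) L')%:Z - a%:Z)%R.
case: H => k1 E1; case: Hi => k2 E2; exists (k1 + k2)%R; lia.
Qed.

Lemma disp0 b : b < P0 -> disp g2 M0 b = 0%R.
Proof. by move=> Hb; rewrite /disp Hcp ov_iota modn_small // subrr. Qed.

Lemma F2 y : ov (G y) M = ov y M.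
Proof.
apply: (@cgr_small P); try exact: ov_lt.
have H := cp_iter Hg2 Hcp Q y M.
have H2 := disp_lvl g2 (ov y M0) HM0M.
rewrite disp0 ?ov_lt // in H2.
case: H => k1 E1; case: H2 => k2 E2.
have E2' : (Q%:Z * (disp g2 M (ov y M0) - 0) = Q%:Z * (k2 * P0%:Z))%R by rewrite E2.
exists (k1 + k2)%R; rewrite -HQ PoszM in E1 *.
lia.
Qed.

Lemma F3 L' (a : 'I_P) : cgr (p L') (disp G L' (sg a)) (disp G L' a).
Proof.
set y := iota p a.
have Ecomm : h (G y) = G (h y).
  rewrite -HN; change (h (fpow h N y)) with (fpow h N.+1 y).
  by rewrite /fpow iterSr.
have HyM : ov y M = a by rewrite /y ov_iota modn_small.
have A := lev_disp (G y) L' Hh; rewrite F2 HyM in A.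
have C := lev_disp (h y) L' HG.
have HhyM : ov (h y) M = sg a by [].
rewrite HhyM in C.
rewrite Ecomm in A.
change (disp G L' a) with ((ov (G y) L')%:Z - a%:Z)%R.
have D : disp h L' a = ((ov (h y) L')%:Z - a%:Z)%R by [].
case: A => k1 E1; case: C => k2 E2; exists (k1 - k2)%R.
rewrite D in E1.
lia.
Qed.

Lemma F4 j (a : 'I_P) : cgr (p L) (ov (fpow h j (iota p a)) L)%:Z
   (a%:Z + \sum_(0 <= i < j) disp h L (iter i sg a))%R.
Proof.
elim: j => [|j IH].
  rewrite big_geq // addr0 /= ov_iota; exact: cgr_modn.
change (fpow h j.+1 (iota p a)) with (h (fpow h j (iota p a))).
have H := lev_disp (fpow h j (iota p a)) L Hh.
have Hs : ov (fpow h j (iota p a)) M = iter j sg a.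
  by have := f_equal val (sig_iter (iota p a) j Hh); rewrite ordM_iota.
rewrite Hs in H.
have -> : (\sum_(0 <= i < j.+1) disp h L (iter i sg a) = \sum_(0 <= i < j) disp h L (iter i sg a) + disp h L (iter j sg a))%R by rewrite big_nat_recr.
case: H => k1 E1; case: IH => k2 E2; exists (k1 + k2)%R.
lia.
Qed.

Lemma F5 (a : 'I_P) : cgr P (disp h L a) ((sg a : nat)%:Z - a%:Z)%R.
Proof.
rewrite /disp; apply: cgrB; last exact: cgrxx.
exact: ov_cgr.
Qed.

Definition W (b : nat) : bool :=
  dec (forall L', cgr (p L') (Q%:Z * disp g2 L' (b %% P0))%R (Q%:Z * disp g2 L' b0)%R).

Lemma W_mod b : W b = W (b %% P0).
Proof. by rewrite /W modn_mod. Qed.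

Lemma W_sg (a : 'I_P) : W (sg a) = W a.
Proof.
have Heq : forall L', cgr (p L') (Q%:Z * disp g2 L' (sg a %% P0))%R (Q%:Z * disp g2 L' (a %% P0))%R.
  move=> L'; apply: cgr_trans (cgr_sym (F1 L' (ltn_ord (sg a)))) _.
  apply: cgr_trans (F3 L' a) _; exact: F1 (ltn_ord a).
apply/idP/idP => /decP H; apply/decP => L'.
  exact: cgr_trans (cgr_sym (Heq L')) (H L').
exact: cgr_trans (Heq L') (H L').
Qed.

Lemma W_iter i (a : 'I_P) : W (iter i sg a) = W a.
Proof. by elim: i => [|i IH] //=; rewrite W_sg. Qed.

Lemma reindexW (f : 'I_P -> 'I_P) (F : 'I_P -> int) : injective f -> (forall a : 'I_P, W (f a) = W a) ->
  (\sum_(a : 'I_P | W a) F (f a))%R = (\sum_(a : 'I_P | W a) F a)%R.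
Proof.
move=> Hf HW; rewrite [RHS](reindex_inj Hf).
by apply: eq_bigl => a; rewrite HW.
Qed.

Definition Ssum : int := (\sum_(a : 'I_P | W a) disp h L a)%R.
Definition cnt : nat := \sum_(a : 'I_P | W a) 1.

Lemma sum_i : cgr P Ssum 0%R.
Proof.
apply: cgr_trans (cgr_sum _ (fun a _ => F5 a)) _.
rewrite sumrB (reindexW (fun a : 'I_P => Posz (nat_of_ord a)) sg_inj W_sg) subrr; exact: cgrxx.
Qed.

Lemma sum_ii : cgr (p L) (\sum_(a : 'I_P | W a) disp G L a)%R (N%:Z * Ssum)%R.
Proof.
have H : forall a : 'I_P, W a -> cgr (p L) (disp G L a) (\sum_(0 <= i < N) disp h L (iter i sg a))%R.
  move=> a _; have := F4 N a; rewrite HN.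
  change (disp G L a) with ((ov (G (iota p a)) L)%:Z - a%:Z)%R.
  case=> k E; exists k; lia.
apply: cgr_trans (cgr_sum _ H) _.
rewrite exchange_big.
have E : forall i : nat, (\sum_(a : 'I_P | W a) disp h L (iter i sg a))%R = Ssum.
  move=> i; rewrite /Ssum; exact: (@reindexW (iter i sg) (fun a : 'I_P => disp h L a) (@iter_inj _ _ i sg_inj) (W_iter i)).
rewrite (eq_bigr _ (fun i _ => E i)) sumr_const_nat subn0 -mulr_natl natz.
exact: cgrxx.
Qed.

Lemma sum_iii : cgr (p L) (\sum_(a : 'I_P | W a) disp G L a)%R (cnt%:Z * (Q%:Z * disp g2 L b0))%R.
Proof.
have H : forall a : 'I_P, W a -> cgr (p L) (disp G L a) (Q%:Z * disp g2 L b0)%R.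
  move=> a /decP Ha; apply: cgr_trans (F1 L (ltn_ord a)) (Ha L).
apply: cgr_trans (cgr_sum _ H) _.
have Hcnt : ((cnt%:Z)%R = \sum_(a : 'I_P | W a) (1%N)%:R)%R by rewrite /cnt -natz natr_sum.
rewrite Hcnt mulr_suml; apply: cgr_eq.
by apply: eq_bigr => a _; rewrite mul1r.
Qed.

Lemma cnt_eq : cnt = Q * \sum_(0 <= b < P0 | W b) 1.
Proof.
rewrite /cnt -(big_mkord (fun a => W a) (fun _ => 1)) -HQ.
apply: count_mod; exact: W_mod.
Qed.

Lemma t_pos : 0 < \sum_(0 <= b < P0 | W b) 1.
Proof.
have HW : W b0 by apply/decP => L'; rewrite modn_small //; exact: cgrxx.
rewrite big_mkcond (bigD1_seq b0) ?iota_uniq //=.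
by rewrite HW.
by rewrite mem_iota add0n subn0.
Qed.

Lemma t_le : \sum_(0 <= b < P0 | W b) 1 <= P0.
Proof.
rewrite big_mkcond /=.
have H : \sum_(0 <= b < P0) (if W b then 1 else 0) <= \sum_(0 <= b < P0) 1.
  by apply: leq_sum => i _; case: (W i).
apply: leq_trans H _.
by rewrite sum_nat_const_nat subn0 muln1.
Qed.

Lemma core : exists t (S : int), [/\ 0 < t, t <= P0, cgr P S 0%R &
  cgr (p L) (N%:Z * S)%R ((Q * t)%:Z * (Q%:Z * disp g2 L b0))%R].
Proof.
exists (\sum_(0 <= b < P0 | W b) 1), Ssum; split.
- exact: t_pos.
- exact: t_le.
- exact: sum_i.
rewrite -cnt_eq.
exact: cgr_trans (cgr_sym sum_ii) sum_iii.
Qed.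
End Core.

Lemma partC (p : scale) s : prime s -> finite_torsion p -> ~ v_infty p s -> ~ Pg p s.
Proof.
move=> Hs Hft Hns [g [Hg Hord Hroot]].
case: (aut_inf_inv Hg) => gi [Hgi Hc1 Hc2].
case: (aut_inf_lev Hg) => Ma HMa; case: (aut_inf_lev Hgi) => Mb HMb.
set M0 := maxn Ma Mb.
have HgM0 : lev g M0 := lev_mono HMa (leq_maxl _ _).
have HgiM0 : lev gi M0 := lev_mono HMb (leq_maxr _ _).
case: (perm_pow HgM0 HgiM0 Hc1) => e0 [He0 Hcp0].
set g1 := fpow g e0.
have Hg1 : lev g1 M0 := lev_fpow e0 HgM0.
case: (torsion_killer Hft) => E [HE HEk].
set g2 := fpow g1 E.
have Hg2 : lev g2 M0 := lev_fpow E Hg1.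
have Hcp2 : forall y, ov (g2 y) M0 = ov y M0 := cp_M Hcp0 E.
have Eg2 : g2 = fpow g (E * e0).
  by apply: functional_extensionality => x; rewrite fpowM.
have Hne : g2 <> (fun x => x) by rewrite Eg2; apply: Hord; rewrite muln_gt0 HE He0.
have [y Hy] : exists y, g2 y <> y.
  apply: NNPP => H; apply: Hne; apply: functional_extensionality => y.
  by apply: NNPP => H2; apply: H; exists y.
have [L0 HL0] : exists L0, ov (g2 y) L0 <> ov y L0.
  apply: NNPP => H; apply: Hy; apply: odo_ext => n.
  by apply: NNPP => H2; apply: H; exists n.
set b0 := ov y M0.
have Hb0 : b0 < p M0 by apply: ov_lt.
set x0 := disp g2 L0 b0.
have Hx0 : ~ cgr (p L0) x0 0%R.
  move=> [k Ek]; apply: HL0; apply: (@cgr_small (p L0)); try exact: ov_lt.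
  have := lev_disp y L0 Hg2; rewrite -/b0 -/x0; case=> k1 E1.
  by exists (k1 + k)%R; lia.
have Hx0E : cgr (p L0) x0 (E%:Z * disp g1 L0 b0)%R := cp_disp Hg1 Hcp0 E L0 Hb0.
case: (find_prime HEk Hx0 Hx0E) => r [Hr Hrinf Hrdiv].
have Hrs : coprime r s.
  rewrite prime_coprime // dvdn_prime2 //; apply/eqP => E1; subst r; exact: Hns Hrinf.
set j0 := logn r (p L0).
set P0 := p M0.
set k := P0 + j0.
set n := r ^ k.
have Hn : 0 < n by rewrite expn_gt0 prime_gt0.
have Hcop : coprime n s by rewrite coprimeXl.
case: (Hroot n Hn Hcop) => h0 [Hh0 Eh0].
set h := fpow h0 (E * e0).
have Hh : aut_inf h by apply: aut_inf_fpow.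
have EhN : fpow h n = g2.
  apply: functional_extensionality => x.
  rewrite /h -fpowM mulnC fpowM Eh0 Eg2 //.
case: (aut_inf_inv Hh) => hi [Hhi Hc3 Hc4].
case: (aut_inf_lev Hh) => Mc HMc; case: (aut_inf_lev Hhi) => Md HMd.
set M := maxn M0 (maxn Mc Md).
have HM0M : M0 <= M by apply: leq_maxl.
have HhM : lev h M.
  by apply: lev_mono HMc _; rewrite /M (leq_trans (leq_maxl Mc Md)) // leq_maxr.
have HhiM : lev hi M.
  by apply: lev_mono HMd _; rewrite /M (leq_trans (leq_maxr Mc Md)) // leq_maxr.
set Q := p M %/ P0.
have HQ : Q * P0 = p M by rewrite divnK // sc_dvd_le.
have HQpos : 0 < Q by move: (sc_pos p M); rewrite -HQ muln_gt0 => /andP [].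
set N := Q * n.
have HN : fpow h N = fpow g2 Q.
  by apply: functional_extensionality => x; rewrite fpowM EhN.
set gam := 2 * logn r Q + P0 + j0.
case: (Hrinf gam) => L1 HL1.
set L := maxn M (maxn L0 L1).
have HML : M <= L by apply: leq_maxl.
have HL0L : L0 <= L by rewrite /L (leq_trans (leq_maxl L0 L1)) // leq_maxr.
have HL1L : L1 <= L by rewrite /L (leq_trans (leq_maxr L0 L1)) // leq_maxr.
case: (core HM0M HML Hg2 Hcp2 HhM HhiM Hc3 HQ HN Hb0) => t [S [Ht Htle HS HNS]].
set x := disp g2 L b0.
set m := Q * t * Q.
have Hm : 0 < m by rewrite !muln_gt0 HQpos Ht.
have Hlogm : logn r m = 2 * logn r Q + logn r t by rewrite !lognM ?muln_gt0 ?HQpos ?Ht // mul2n -addnn addnAC.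
have Hlt : logn r t < t := logn_lt Hr Ht.
set gm := logn r m + j0.
have Hgm : gm <= gam.
  rewrite /gm /gam Hlogm leq_add2r leq_add2l; exact: leq_trans (ltnW Hlt) Htle.
have HpL : r ^ gm %| p L.
  rewrite pfactor_dvdn // ?sc_pos //; apply: leq_trans Hgm (HL1 L HL1L).
have HrN : r ^ gm %| Q * Q * n.
  rewrite /gm Hlogm /n.
  have -> : 2 * logn r Q + logn r t + j0 = logn r Q + logn r Q + (logn r t + j0)
    by rewrite mul2n -addnn !addnA.
  rewrite expnD (expnD r (logn r Q)); apply: dvdn_mul; first apply: dvdn_mul; try exact: pfactor_dvdnn.
  by rewrite dvdn_exp2l // /k leq_add2r; exact: leq_trans (ltnW Hlt) Htle.
have H1 : (((r ^ gm)%:Z)%R %| (N%:Z * S)%R)%Z.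
  case: HS => kS ES; rewrite subr0 in ES; rewrite ES -HQ.
  have -> : (N%:Z * (kS * (Q * P0)%:Z) = (Q * Q * n)%:Z * (kS * P0%:Z))%R.
    by rewrite /N !PoszM; ring.
  by apply: dvdz_mulr; rewrite dvdz_nat.
have H2 : (((r ^ gm)%:Z)%R %| (N%:Z * S - (Q * t)%:Z * (Q%:Z * x))%R)%Z.
  apply: dvdz_trans _ (iffLR (@cgr_divP _ _ _) HNS); by rewrite dvdz_nat.
have H3 : (((r ^ gm)%:Z)%R %| (m%:Z * x)%R)%Z.
  have -> : (m%:Z * x = N%:Z * S - (N%:Z * S - (Q * t)%:Z * (Q%:Z * x)))%R.
    by rewrite /m !PoszM; ring.
  by apply: rpredB.
have H4 : r ^ j0 %| `|x|%N.
  apply: (val_cancel Hr Hm); rewrite -/gm.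
  have -> : m * `|x|%N = `|(m%:Z * x)%R|%N by rewrite abszM absz_nat.
  by rewrite -dvdz_nat.
apply: Hrdiv.
have H5 := disp_lvl g2 b0 HL0L; rewrite -/x0 -/x in H5.
have H6 : (((r ^ j0)%:Z)%R %| (x - x0)%R)%Z.
  apply: dvdz_trans _ (iffLR (@cgr_divP _ _ _) H5); rewrite dvdz_nat; exact: pfactor_dvdnn.
rewrite -dvdz_nat.
have -> : x0 = (x - (x - x0))%R by ring.
by apply: rpredB => //; rewrite dvdz_nat.
Qed.

Theorem theorem5p5 (p q : scale) (s : nat) :
  finite_torsion p -> finite_torsion q -> prime s ->
  v_infty q s -> aut_inf_iso p q -> v_infty p s.
Proof.
move=> Hp Hq Hs Hqs Hiso.
apply: NNPP => Hns.
exact: (partC Hs Hp Hns (transfer Hiso (partA Hs Hqs))).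
Qed.
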